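(* Let $t,\Delta\in\mathbb{N}$. If $A_1$ $(t,\Delta)$-approximates $B_1$ and $A_2$ $(t,\Delta)$-approximates $B_2$, then $A_1\oplus_t A_2$ $(t,\Delta)$-approximates $B_1\oplus_t B_2$.
   Context: $\mathbb{N}=\{0,1,2,\dots\}$, $[t]=\{0,1,\dots,t\}$. For $A,B\subseteq\mathbb{N}$, $A+B=\{a+b: a\in A, b\in B\}$ and $A\oplus_t B=(A+B)\cap[t]$. For $A\subseteq[t]$ and $b\in\mathbb{N}$ define $\mathrm{apx}^-_t(b,A)=\max\{a\in A\cup\{t+1\}: a\le b\}$ and $\mathrm{apx}^+_t(b,A)=\min\{a\in A\cup\{t+1\}: a\ge b\}$, with $\max\emptyset=-\infty$, $\min\emptyset=\infty$. $A$ $(t,\Delta)$-approximates $B$ if $A\subseteq B\subseteq[t]$ and for every $b\in B$, $\mathrm{apx}^+_t(b,A)-\mathrm{apx}^-_t(b,A)\le\Delta$. *)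

(* Defs.v *)
From Stdlib Require Import Arith Lia.

Definition nset := nat -> Prop.

Definition sumset (A B : nset) : nset := fun c => exists a b, A a /\ B b /\ c = a + b.

Definition capsum (t : nat) (A B : nset) : nset := fun c => sumset A B c /\ c <= t.

Definition ext (t : nat) (A : nset) : nset := fun a => A a \/ a = t + 1.

Definition is_apx_minus (t : nat) (A : nset) (b a : nat) : Prop :=
  ext t A a /\ a <= b /\ forall a', ext t A a' -> a' <= b -> a' <= a.

Definition is_apx_plus (t : nat) (A : nset) (b a : nat) : Prop :=
  ext t A a /\ b <= a /\ forall a', ext t A a' -> b <= a' -> a <= a'.

(* A (t,Δ)-approximates B.  If apx^- = -oo or apx^+ = +oo, the difference is
   +oo and the inequality fails; so we require both to be finite. *)
Definition approximates (t D : nat) (A B : nset) : Prop :=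
  (forall a, A a -> B a) /\ (forall b, B b -> b <= t) /\
  forall b, B b -> exists am ap,
    is_apx_minus t A b am /\ is_apx_plus t A b ap /\ ap - am <= D.

(* Main.v *)
Require Import Defs.
From Stdlib Require Import Arith Lia Classical.

Lemma min_ex (P : nat -> Prop) n0 : P n0 -> exists m, P m /\ forall k, P k -> m <= k.
Proof.
  revert P. induction n0 as [n IH] using lt_wf_ind. intros P Hn.
  destruct (classic (exists k, k < n /\ P k)) as [[k [Hk Pk]]|H].
  - exact (IH k Hk P Pk).
  - exists n; split; auto. intros k Pk. destruct (le_lt_dec n k); auto.
    exfalso; apply H; eauto.
Qed.

Lemma max_ex (P : nat -> Prop) m0 c : P m0 -> (forall x, P x -> x <= c) ->
  exists M, P M /\ forall k, P k -> k <= M.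
Proof.
  intros H0 Hc.
  destruct (min_ex (fun k => forall x, P x -> x <= k) c Hc) as [m [Qm Hm]].
  exists m; split; auto.
  destruct (classic (P m)) as [|NP]; auto. exfalso.
  destruct m as [|m].
  - assert (m0 = 0) by (specialize (Qm m0 H0); lia). subst. apply NP; auto.
  - assert (S m <= m); [|lia]. apply Hm. intros x Px.
    specialize (Qm x Px). assert (x <> S m) by (intro; subst; auto). lia.
Qed.

Theorem lemma4p5 (t D : nat) (A1 B1 A2 B2 : nset) :
  approximates t D A1 B1 -> approximates t D A2 B2 ->
  approximates t D (capsum t A1 A2) (capsum t B1 B2).
Proof.
  intros [S1 [T1 H1]] [S2 [T2 H2]].
  split; [|split].
  - intros c [[a [b [Ha [Hb E]]]] Hc]. split; auto. exists a, b; auto.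
  - intros c [_ Hc]; auto.
  - intros c [[b1 [b2 [Hb1 [Hb2 E]]]] Hc]. subst c.
    destruct (H1 b1 Hb1) as [l1 [r1 [[El1 [Ll1 Ml1]] [[Er1 [Lr1 Mr1]] D1]]]].
    destruct (H2 b2 Hb2) as [l2 [r2 [[El2 [Ll2 Ml2]] [[Er2 [Lr2 Mr2]] D2]]]].
    assert (A1 l1) by (destruct El1; auto; lia).
    assert (A2 l2) by (destruct El2; auto; lia).
    set (A := capsum t A1 A2).
    assert (HA : forall x y, A1 x -> A2 y -> x + y <= t -> A (x + y)).
    { intros x y Hx Hy Hxy. split; auto. exists x, y; auto. }
    destruct (max_ex (fun a => ext t A a /\ a <= b1 + b2) (l1 + l2) (b1 + b2))
      as [L [[EL LL] ML]].
    { split; [left; apply HA; auto; lia | lia]. }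
    { intros x [_ Hx]; auto. }
    destruct (min_ex (fun a => ext t A a /\ b1 + b2 <= a) (t + 1))
      as [R [[ER LR] MR]].
    { split; [right; auto | lia]. }
    exists L, R. split; [|split].
    + split; [auto|split; [auto|]]. intros a' X X'; apply ML; auto.
    + split; [auto|split; [auto|]]. intros a' X X'; apply MR; auto.
    + assert (Rt : R <= t + 1) by (apply MR; split; [right; auto|lia]).
      assert (GR : forall x y, ext t A1 x -> A2 y -> b1 + b2 <= x + y -> R <= x + y).
      { intros x y Ex Ay Hxy. destruct Ex as [Ax|Ex].
        - destruct (le_lt_dec (x + y) t). apply MR; split; auto. left; apply HA; auto. lia.
        - lia. }
      assert (GR2 : forall x y, A1 x -> ext t A2 y -> b1 + b2 <= x + y -> R <= x + y).
      { intros x y Ax Ey Hxy. destruct Ey as [Ay|Ey].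
        - destruct (le_lt_dec (x + y) t). apply MR; split; auto. left; apply HA; auto. lia.
        - lia. }
      assert (GL : L >= l1 + l2) by (apply ML; split; [left; apply HA; auto; lia|lia]).
      destruct (le_lt_dec (b1 + b2) (r1 + l2)).
      { specialize (GR r1 l2 Er1 H0 l). lia. }
      destruct (le_lt_dec (b1 + b2) (l1 + r2)).
      { specialize (GR2 l1 r2 H Er2 l0). lia. }
      assert (A1 r1) by (destruct Er1; auto; lia).
      assert (A2 r2) by (destruct Er2; auto; lia).
      assert (L >= r1 + l2) by (apply ML; split; [left; apply HA; auto; lia|lia]).
      assert (R <= r1 + r2) by (apply GR; [left; auto | auto | lia]).
      lia.
Qed.
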